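(* Let $\mathfrak l$ be a real finite-dimensional nilpotent Lie algebra with $\dim\mathfrak l'=2$ and $\mathfrak l'\subset\mathfrak z(\mathfrak l)$, let $X_1,X_2,X_3\in\mathfrak l$ and let $Y,Z$ be a basis of $\mathfrak l'$ such that $[X_1,X_2]=Y$, $[X_1,X_3]=Z$, $[X_2,X_3]=0$. Let $\mathfrak a$ be a semisimple orthogonal $\mathfrak l$-module and let $(\alpha,\gamma)\in\mathcal Z^2_Q(\mathfrak l,\mathfrak a)$ with $\alpha(\mathfrak l,\mathfrak l)\subset\mathfrak a^{\mathfrak l}$. Then: (i) $\alpha(Y,Z)=0$; (ii) $\alpha(Y,L)=0$ for all $L\in\mathfrak l$ with $[L,X_1]=[L,X_2]=0$; (iii) $\alpha(Z,L)=0$ for all $L\in\mathfrak l$ with $[L,X_1]=[L,X_3]=0$; (iv) $\langle\alpha(U_1,L_1),\alpha(U_2,L_2)\rangle=\langle\alpha(U_1,L_2),\alpha(U_2,L_1)\rangle$ for all $U_1,U_2\in\mathfrak l'$ and $L_1,L_2\in\mathfrak l$.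
   Context: $\mathfrak l'=[\mathfrak l,\mathfrak l]$, $\mathfrak z(\mathfrak l)$ the centre. An orthogonal $\mathfrak l$-module is a finite-dimensional real vector space $\mathfrak a$ with a nondegenerate symmetric bilinear form $\langle\cdot,\cdot\rangle$ and a representation of $\mathfrak l$ by skew-adjoint maps; $\mathfrak a^{\mathfrak l}$ denotes the invariants. $C^p(\mathfrak l,\mathfrak a)$ are alternating $p$-linear maps with the Chevalley–Eilenberg differential $d$, $C^p(\mathfrak l)=C^p(\mathfrak l,\mathbb R)$; $\langle\alpha\wedge\alpha\rangle\in C^4(\mathfrak l)$ is the wedge product of $\alpha$ with itself followed by contraction with $\langle\cdot,\cdot\rangle$. $\mathcal Z^2_Q(\mathfrak l,\mathfrak a)=\{(\alpha,\gamma)\in C^2(\mathfrak l,\mathfrak a)\oplus C^3(\mathfrak l): d\alpha=0,\ d\gamma=\frac12\langle\alpha\wedge\alpha\rangle\}$. *)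

(* Defs.v *)
From HB Require Import structures.
From mathcomp Require Import all_boot all_order all_algebra.
From mathcomp Require Import reals.
Set Implicit Arguments. Unset Strict Implicit. Unset Printing Implicit Defensive.
Import Order.TTheory GRing.Theory Num.Theory.
Local Open Scope ring_scope.

Section Defs.
Variable R : realType.

Section Lie.
Variable L : vectType R.
Variable br : L -> L -> L.

Definition is_lie_bracket : Prop :=
  [/\ (forall (a : R) x y z, br (a *: x + y) z = a *: br x z + br y z),
      (forall (a : R) x y z, br z (a *: x + y) = a *: br z x + br z y),
      (forall x, br x x = 0) &
      (forall x y z, br x (br y z) + br y (br z x) + br z (br x y) = 0)].

(* nilpotent: all iterated brackets [x_1,[x_2,...,[x_n,y]...]] of length n vanish *)
Definition lie_nilpotent : Prop :=
  exists n : nat, forall (s : seq L) (y : L), size s = n -> foldr br y s = 0.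

Definition in_derived (u : L) : Prop :=
  exists s : seq (L * L), u = \sum_(p <- s) br p.1 p.2.

Definition derived_in_centre : Prop :=
  forall u, in_derived u -> forall w, br u w = 0.

Definition derived_basis (Y Z : L) : Prop :=
  [/\ in_derived Y, in_derived Z, free [:: Y; Z] &
      forall u, in_derived u -> exists a b : R, u = a *: Y + b *: Z].
End Lie.

Section Module.
Variables (L : vectType R) (br : L -> L -> L).
Variable A : vectType R.
Variable form : A -> A -> R.
Variable rho : L -> A -> A.

Definition is_orth_form : Prop :=
  [/\ (forall (c : R) u v w, form (c *: u + v) w = c * form u w + form v w),
      (forall u v, form u v = form v u) &
      (forall u, (forall v, form u v = 0) -> u = 0)].

Definition is_representation : Prop :=
  [/\ (forall (c : R) x y v, rho (c *: x + y) v = c *: rho x v + rho y v),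
      (forall (c : R) x u v, rho x (c *: u + v) = c *: rho x u + rho x v) &
      (forall x y v, rho (br x y) v = rho x (rho y v) - rho y (rho x v))].

Definition skew_adjoint_rep : Prop :=
  forall x u v, form (rho x u) v = - form u (rho x v).

Definition orthogonal_module : Prop :=
  [/\ is_orth_form, is_representation & skew_adjoint_rep].

Definition invariant_subspace (U : {vspace A}) : Prop :=
  forall x u, u \in U -> rho x u \in U.

Definition semisimple_module : Prop :=
  forall U : {vspace A}, invariant_subspace U ->
    exists W : {vspace A}, [/\ invariant_subspace W, (U :&: W = 0)%VS &
                               (U + W = fullv)%VS].

Definition is_invariant (v : A) : Prop := forall x, rho x v = 0.
End Module.

Section Cochains.
Variables (L : vectType R) (br : L -> L -> L).
Variables (A : vectType R) (form : A -> A -> R) (rho : L -> A -> A).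

Definition is_2cochain (alpha : L -> L -> A) : Prop :=
  [/\ (forall (c : R) x y z, alpha (c *: x + y) z = c *: alpha x z + alpha y z),
      (forall (c : R) x y z, alpha z (c *: x + y) = c *: alpha z x + alpha z y) &
      (forall x, alpha x x = 0)].

Definition is_3cochain (gamma : L -> L -> L -> R) : Prop :=
  [/\ (forall (c : R) x y z w, gamma (c *: x + y) z w = c * gamma x z w + gamma y z w),
      (forall (c : R) x y z w, gamma z (c *: x + y) w = c * gamma z x w + gamma z y w),
      (forall (c : R) x y z w, gamma z w (c *: x + y) = c * gamma z w x + gamma z w y),
      (forall x y, gamma x x y = 0) &
      [/\ (forall x y, gamma x y x = 0) & (forall x y, gamma y x x = 0)]].

(* Chevalley-Eilenberg differential of a 2-cochain *)
Definition d2 (alpha : L -> L -> A) (x0 x1 x2 : L) : A :=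
  rho x0 (alpha x1 x2) - rho x1 (alpha x0 x2) + rho x2 (alpha x0 x1)
  - alpha (br x0 x1) x2 + alpha (br x0 x2) x1 - alpha (br x1 x2) x0.

(* Chevalley-Eilenberg differential of a real 3-cochain (trivial coefficients) *)
Definition d3 (gamma : L -> L -> L -> R) (x0 x1 x2 x3 : L) : R :=
  - gamma (br x0 x1) x2 x3 + gamma (br x0 x2) x1 x3 - gamma (br x0 x3) x1 x2
  - gamma (br x1 x2) x0 x3 + gamma (br x1 x3) x0 x2 - gamma (br x2 x3) x0 x1.

(* <alpha /\ alpha>: sum over (2,2)-shuffles sigma of
   sgn(sigma) <alpha(x_s1,x_s2), alpha(x_s3,x_s4)> *)
Definition wedge_form (alpha : L -> L -> A) (x0 x1 x2 x3 : L) : R :=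
    form (alpha x0 x1) (alpha x2 x3) - form (alpha x0 x2) (alpha x1 x3)
  + form (alpha x0 x3) (alpha x1 x2) + form (alpha x1 x2) (alpha x0 x3)
  - form (alpha x1 x3) (alpha x0 x2) + form (alpha x2 x3) (alpha x0 x1).

Definition in_Z2Q (alpha : L -> L -> A) (gamma : L -> L -> L -> R) : Prop :=
  [/\ is_2cochain alpha, is_3cochain gamma,
      (forall x0 x1 x2, d2 alpha x0 x1 x2 = 0) &
      (forall x0 x1 x2 x3, d3 gamma x0 x1 x2 x3 = 2^-1 * wedge_form alpha x0 x1 x2 x3)].
End Cochains.
End Defs.

(* Main.v *)
Require Import Defs.
From HB Require Import structures.
From mathcomp Require Import all_boot all_order all_algebra.
From mathcomp Require Import reals.
From mathcomp Require Import lra.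
Import Order.TTheory GRing.Theory Num.Theory.
Local Open Scope ring_scope.

Set Implicit Arguments. Unset Strict Implicit.
Section Helpers.
Variable R : realType.

Lemma lin0 (V W : lmodType R) (g : V -> W) :
  (forall c x y, g (c *: x + y) = c *: g x + g y) -> g 0 = 0.
Proof.
move=> H; have e := H 1 0 0; rewrite !scale1r addr0 in e.
by apply: (addrI (g 0)); rewrite addr0 -e.
Qed.

Lemma lin_add (V W : lmodType R) (g : V -> W) :
  (forall c x y, g (c *: x + y) = c *: g x + g y) ->
  forall x y, g (x + y) = g x + g y.
Proof. by move=> H x y; have := H 1 x y; rewrite !scale1r. Qed.

Lemma lin_scale (V W : lmodType R) (g : V -> W) :
  (forall c x y, g (c *: x + y) = c *: g x + g y) ->
  forall c x, g (c *: x) = c *: g x.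
Proof. by move=> H c x; have := H c x 0; rewrite addr0 (lin0 H) addr0. Qed.

Lemma lin_sum (V W : lmodType R) (g : V -> W) (T : Type) (F : T -> V) s :
  (forall c x y, g (c *: x + y) = c *: g x + g y) ->
  g (\sum_(p <- s) F p) = \sum_(p <- s) g (F p).
Proof.
move=> H; elim: s => [|a s IH]; first by rewrite !big_nil (lin0 H).
by rewrite !big_cons (lin_add H) IH.
Qed.

Lemma linR0 (V : lmodType R) (g : V -> R) :
  (forall c x y, g (c *: x + y) = c * g x + g y) -> g 0 = 0.
Proof.
move=> H; have e := H 1 0 0; rewrite scale1r addr0 mul1r in e.
by apply: (addrI (g 0)); rewrite addr0 -e.
Qed.

Lemma linR_add (V : lmodType R) (g : V -> R) :
  (forall c x y, g (c *: x + y) = c * g x + g y) ->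
  forall x y, g (x + y) = g x + g y.
Proof. by move=> H x y; have := H 1 x y; rewrite scale1r mul1r. Qed.

Lemma linR_scale (V : lmodType R) (g : V -> R) :
  (forall c x y, g (c *: x + y) = c * g x + g y) ->
  forall c x, g (c *: x) = c * g x.
Proof. by move=> H c x; have := H c x 0; rewrite addr0 (linR0 H) addr0. Qed.

End Helpers.

Theorem lemma2 (R : realType) (L : vectType R) (br : L -> L -> L)
  (A : vectType R) (form : A -> A -> R) (rho : L -> A -> A)
  (X1 X2 X3 Y Z : L) (alpha : L -> L -> A) (gamma : L -> L -> L -> R) :
  is_lie_bracket br ->
  lie_nilpotent br ->
  derived_in_centre br ->
  derived_basis br Y Z ->
  br X1 X2 = Y -> br X1 X3 = Z -> br X2 X3 = 0 ->
  orthogonal_module br form rho ->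
  semisimple_module rho ->
  in_Z2Q br form rho alpha gamma ->
  (forall x y, is_invariant rho (alpha x y)) ->
  [/\ alpha Y Z = 0,
      (forall W, br W X1 = 0 -> br W X2 = 0 -> alpha Y W = 0),
      (forall W, br W X1 = 0 -> br W X3 = 0 -> alpha Z W = 0) &
      (forall U1 U2 L1 L2, in_derived br U1 -> in_derived br U2 ->
         form (alpha U1 L1) (alpha U2 L2) = form (alpha U1 L2) (alpha U2 L1))].
Proof.
move=> [brL brR brxx jac] _ cent [dY dZ _ basis] eY eZ e23 [[fL fsym _] _ _] _
  [[aL aR axx] [gL1 gL2 gL3 g1 [g2 g3]] d2a d3g] inv.
have br0l : forall y, br 0 y = 0.
  by move=> y; exact: (lin0 (g := fun x => br x y) (fun c x z => brL c x z y)).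
have brDl : forall x y z, br (x + y) z = br x z + br y z.
  by move=> x y z; exact: (lin_add (g := fun x => br x z) (fun c x y => brL c x y z)).
have brDr : forall x y z, br z (x + y) = br z x + br z y.
  by move=> x y z; exact: (lin_add (g := br z) (fun c x y => brR c x y z)).
have brN : forall x y, br x y = - br y x.
  move=> x y; have := brxx (x + y); rewrite brDl !brDr !brxx add0r addr0.
  by move/eqP; rewrite addr_eq0 => /eqP.
have centr : forall u, in_derived br u -> forall w, br w u = 0.
  by move=> u du w; rewrite brN (cent u du w) oppr0.
have a0l : forall y, alpha 0 y = 0.
  by move=> y; exact: (lin0 (g := fun x => alpha x y) (fun c x z => aL c x z y)).
have inv' : forall x y z, rho z (alpha x y) = 0 by move=> x y z; exact: inv x y z.
have coc : forall x0 x1 x2,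
    alpha (br x0 x1) x2 = alpha (br x0 x2) x1 - alpha (br x1 x2) x0.
  move=> x0 x1 x2; have h := d2a x0 x1 x2; rewrite /d2 !inv' in h.
  apply/eqP; rewrite -subr_eq0 -oppr_eq0; apply/eqP; rewrite -{}h.
  rewrite subrr add0r sub0r.
  by rewrite opprB addrAC (addrC (alpha (br x0 x2) x1)).
have aDc : forall u c, in_derived br u -> in_derived br c -> alpha u c = 0.
  move=> u c [s ->] dc.
  rewrite (@lin_sum _ _ _ (fun x => alpha x c) _ _ _ (fun c0 x z => aL c0 x z c)).
  by apply: big1 => p _; rewrite coc !centr // !a0l subrr.
split.
- exact: aDc.
- move=> W h1 h2; rewrite -eY coc.
  by rewrite (brN X1) (brN X2) h1 h2 oppr0 !a0l subrr.
- move=> W h1 h3; rewrite -eZ coc.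
  by rewrite (brN X1) (brN X3) h1 h3 oppr0 !a0l subrr.
move=> U1 U2 L1 L2 d1 d2.
have gDl : forall x y z w, gamma (x + y) z w = gamma x z w + gamma y z w.
  by move=> x y z w; exact: (linR_add (g := fun x => gamma x z w) (fun c x y => gL1 c x y z w)).
have gDm : forall x y z w, gamma z (x + y) w = gamma z x w + gamma z y w.
  by move=> x y z w; exact: (linR_add (g := fun x => gamma z x w) (fun c x y => gL2 c x y z w)).
have gDr : forall x y z w, gamma z w (x + y) = gamma z w x + gamma z w y.
  by move=> x y z w; exact: (linR_add (g := fun x => gamma z w x) (fun c x y => gL3 c x y z w)).
have gZl : forall c x z w, gamma (c *: x) z w = c * gamma x z w.
  by move=> c x z w; exact: (linR_scale (g := fun x => gamma x z w) (fun c x y => gL1 c x y z w)).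
have gZm : forall c x z w, gamma z (c *: x) w = c * gamma z x w.
  by move=> c x z w; exact: (linR_scale (g := fun x => gamma z x w) (fun c x y => gL2 c x y z w)).
have gZr : forall c x z w, gamma z w (c *: x) = c * gamma z w x.
  by move=> c x z w; exact: (linR_scale (g := fun x => gamma z w x) (fun c x y => gL3 c x y z w)).
have g0l : forall z w, gamma 0 z w = 0.
  by move=> z w; exact: (linR0 (g := fun x => gamma x z w) (fun c x y => gL1 c x y z w)).
have f0l : forall w, form 0 w = 0.
  by move=> w; exact: (linR0 (g := fun x => form x w) (fun c x y => fL c x y w)).
have f0r : forall w, form w 0 = 0 by move=> w; rewrite fsym f0l.
have gV : gamma (br L1 L2) U1 U2 = 0.
  have [a [b ->]] := basis _ (ex_intro _ [:: (L1, L2)] (esym (big_seq1 _ _ _))).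
  have [c [d ->]] := basis _ d1.
  have [e [f ->]] := basis _ d2.
  rewrite !gDl !gDm !gDr !gZl !gZm !gZr !g1 !g2 !g3.
  by rewrite !mulr0 !addr0.
have h := d3g U1 U2 L1 L2.
rewrite /d3 /wedge_form !(cent U1 d1) !(cent U2 d2) !g0l gV (aDc U1 U2) // !f0l !f0r in h.
have s1 := fsym (alpha U2 L1) (alpha U1 L2).
have s2 := fsym (alpha U2 L2) (alpha U1 L1).
lra.
Qed.
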